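(* Let $\Delta$ be a geodetic graph and $s$ a positive integer. If every isometrically embedded circuit in $\Delta$ has length at most $2s+1$, then $\Delta$ is $s$-broomlike.
   Context: Graphs are simple and undirected. A graph is geodetic if between any two vertices there is a unique shortest path (geodesic); $d$ denotes the path metric. A path $u_0,\dots,u_n$ is an embedded circuit of length $n$ if $u_0,\dots,u_{n-1}$ are distinct and $u_0=u_n$; it is isometrically embedded if $d(u_i,u_j)=\min\{j-i,n+i-j\}$ for all $0\le i<j<n$ (a path $u,v,u$ with $u,v$ adjacent counts as one of length two). A geodetic graph $\Delta$ is $s$-broomlike if whenever $a_0,\dots,a_{n-1},a_n,b$ is a path of distinct vertices such that $a_0,\dots,a_n$ is a geodesic but $a_0,\dots,a_n,b$ is not, then the geodesic from $a_0$ to $b$ is $a_0,\dots,a_{n-p},b_{n-p+1},\dots,b_n=b$ for some $p\le s$ with $b_{n-p+1}\neq a_{n-p+1}$. *)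

(* Defs.v *)
From Stdlib Require Import List Arith Lia.
Import ListNotations.

Definition simple_graph {V : Type} (adj : V -> V -> Prop) : Prop :=
  (forall x y, adj x y -> adj y x) /\ (forall x, ~ adj x x).

(* A path (walk) u_0, ..., u_n given as the list [u_0; ...; u_n]:
   consecutive vertices are adjacent.  Its length is n = length - 1. *)
Fixpoint walk {V : Type} (adj : V -> V -> Prop) (p : list V) : Prop :=
  match p with
  | x :: ((y :: _) as q) => adj x y /\ walk adj q
  | _ => True
  end.

Definition walk_ft {V : Type} (adj : V -> V -> Prop) (u v : V) (p : list V) : Prop :=
  walk adj p /\ nth_error p 0 = Some u /\ nth_error p (length p - 1) = Some v.

Definition dist {V : Type} (adj : V -> V -> Prop) (u v : V) (k : nat) : Prop :=
  (exists p, walk_ft adj u v p /\ length p = S k) /\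
  (forall p, walk_ft adj u v p -> S k <= length p).

Definition geodesic_ft {V : Type} (adj : V -> V -> Prop) (u v : V) (p : list V) : Prop :=
  walk_ft adj u v p /\ (forall q, walk_ft adj u v q -> length p <= length q).

Definition is_geodesic {V : Type} (adj : V -> V -> Prop) (p : list V) : Prop :=
  exists u v, geodesic_ft adj u v p.

Definition geodetic {V : Type} (adj : V -> V -> Prop) : Prop :=
  forall u v, exists! p, geodesic_ft adj u v p.

Definition iso_circuit {V : Type} (adj : V -> V -> Prop) (c : list V) (n : nat) : Prop :=
  length c = S n /\ walk adj c /\
  nth_error c n = nth_error c 0 /\
  NoDup (firstn n c) /\
  (forall i j x y, i < j -> j < n ->
     nth_error c i = Some x -> nth_error c j = Some y ->
     dist adj x y (Nat.min (j - i) (n + i - j))).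

Definition broomlike {V : Type} (adj : V -> V -> Prop) (s : nat) : Prop :=
  forall (a : list V) (b a0 : V) (n : nat),
    length a = S n ->
    nth_error a 0 = Some a0 ->
    NoDup (a ++ [b]) ->
    walk adj (a ++ [b]) ->
    is_geodesic adj a ->
    ~ is_geodesic adj (a ++ [b]) ->
    forall g, geodesic_ft adj a0 b g ->
    exists p, 1 <= p /\ p <= s /\ p <= n /\
      length g = S n /\
      (forall i, i <= n - p -> nth_error g i = nth_error a i) /\
      nth_error g (n - p + 1) <> nth_error a (n - p + 1).

(* Main.v *)
Require Import Defs.
From Stdlib Require Import List Arith Lia Classical.
Import ListNotations.

Definition chain {V : Type} (adj : V -> V -> Prop) (u v : V) (L : nat) (f : nat -> V) :=
  f 0 = u /\ f L = v /\ forall i, i < L -> adj (f i) (f (S i)).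

Lemma walk_nth {V : Type} (adj : V -> V -> Prop) (d : V) : forall l,
  walk adj l <-> (forall i, S i < length l -> adj (nth i l d) (nth (S i) l d)).
Proof.
  induction l as [|x l IH]; simpl.
  - split; [intros _ i H; lia | auto].
  - destruct l as [|y l].
    + split; [intros _ i H; simpl in H; lia | auto].
    + split.
      * intros [Hxy Hw] i Hi. destruct i as [|i]. exact Hxy.
        apply IH; [exact Hw | simpl in *; lia].
      * intros H. split. apply (H 0); simpl; lia.
        apply IH. intros i Hi. apply (H (S i)). simpl in *; lia.
Qed.

Lemma nth_map_seq {V : Type} (f : nat -> V) (d : V) L i :
  i < L -> nth i (map f (seq 0 L)) d = f i.
Proof.
  intro H. rewrite nth_indep with (d' := f 0) by (rewrite length_map, length_seq; lia).
  rewrite map_nth, seq_nth by lia. reflexivity.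
Qed.

Lemma nth_error_map_seq {V : Type} (f : nat -> V) L i :
  i < L -> nth_error (map f (seq 0 L)) i = Some (f i).
Proof.
  intro H. rewrite nth_error_map, nth_error_seq.
  destruct (Nat.ltb_spec i L); [reflexivity | lia].
Qed.

Lemma chain_walk_ft {V : Type} (adj : V -> V -> Prop) u v L f :
  chain adj u v L f -> walk_ft adj u v (map f (seq 0 (S L))).
Proof.
  intros [H0 [HL Ha]]. split; [|split].
  - apply (walk_nth adj u). rewrite length_map, length_seq. intros i Hi.
    rewrite !nth_map_seq by lia. apply Ha; lia.
  - rewrite nth_error_map_seq by lia. now rewrite H0.
  - rewrite length_map, length_seq. rewrite nth_error_map_seq by lia.
    replace (S L - 1) with L by lia. now rewrite HL.
Qed.

Lemma walk_ft_chain {V : Type} (adj : V -> V -> Prop) u v p :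
  walk_ft adj u v p -> exists L f, length p = S L /\ chain adj u v L f.
Proof.
  intros [Hw [H0 HL]]. destruct p as [|x p']; [discriminate|].
  exists (length p'), (fun i => nth i (x :: p') u).
  split; [reflexivity|]. split; [|split].
  - simpl in H0. injection H0. auto.
  - simpl in HL. replace (length p' - 0) with (length p') in HL by lia.
    rewrite nth_error_nth' with (d := u) in HL by (simpl; lia).
    injection HL; auto.
  - intros i Hi. apply (walk_nth adj u (x :: p')); [exact Hw | simpl; lia].
Qed.

Lemma dist_chain {V : Type} (adj : V -> V -> Prop) u v k :
  dist adj u v k -> exists f, chain adj u v k f.
Proof.
  intros [[p [Hp Hl]] _]. destruct (walk_ft_chain adj u v p Hp) as [L [f [HL Hc]]].
  exists f. replace k with L by lia. exact Hc.
Qed.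

Lemma dist_min {V : Type} (adj : V -> V -> Prop) u v k L f :
  dist adj u v k -> chain adj u v L f -> k <= L.
Proof.
  intros [_ Hm] Hc. apply chain_walk_ft in Hc. apply Hm in Hc.
  rewrite length_map, length_seq in Hc. lia.
Qed.

Lemma dist_intro {V : Type} (adj : V -> V -> Prop) u v k f :
  chain adj u v k f -> (forall L g, chain adj u v L g -> k <= L) -> dist adj u v k.
Proof.
  intros Hc Hm. split.
  - exists (map f (seq 0 (S k))). split. apply chain_walk_ft; auto.
    rewrite length_map, length_seq; auto.
  - intros p Hp. destruct (walk_ft_chain adj u v p Hp) as [L [g [HL Hg]]].
    apply Hm in Hg. lia.
Qed.

Lemma nat_min_ex (P : nat -> Prop) : forall L, P L -> exists m, P m /\ forall m', P m' -> m <= m'.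
Proof.
  intro L. induction L as [L IH] using (well_founded_induction lt_wf). intro HP.
  destruct (classic (exists m', m' < L /\ P m')) as [[m' [Hlt Hm']]|Hno].
  - exact (IH m' Hlt Hm').
  - exists L. split; auto. intros m' Hm'. destruct (Nat.le_gt_cases L m'); auto.
    exfalso. apply Hno. eauto.
Qed.

Lemma chain_dist {V : Type} (adj : V -> V -> Prop) u v L f :
  chain adj u v L f -> exists k, dist adj u v k /\ k <= L.
Proof.
  intro Hc.
  destruct (nat_min_ex (fun m => exists g, chain adj u v m g) L (ex_intro _ f Hc)) as [m [[g Hg] Hmin]].
  exists m. split.
  - apply (dist_intro adj u v m g Hg). intros L' g' Hg'. apply Hmin. eauto.
  - apply Hmin. eauto.
Qed.

Lemma chain_refl {V : Type} (adj : V -> V -> Prop) u : chain adj u u 0 (fun _ => u).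
Proof. split; [|split]; auto. intros; lia. Qed.

Lemma chain_adj {V : Type} (adj : V -> V -> Prop) u v :
  adj u v -> chain adj u v 1 (fun t => if t =? 0 then u else v).
Proof. intro H. split; [|split]; auto. intros i Hi. destruct i; [auto|lia]. Qed.

Lemma chain_trans {V : Type} (adj : V -> V -> Prop) u m v a b f g :
  chain adj u m a f -> chain adj m v b g ->
  chain adj u v (a + b) (fun t => if t <=? a then f t else g (t - a)).
Proof.
  intros [F0 [Fa Fs]] [G0 [Gb Gs]]. split; [|split].
  - simpl. exact F0.
  - destruct (Nat.leb_spec (a + b) a).
    + assert (b = 0) by lia. subst b. replace (a + 0) with a by lia. congruence.
    + replace (a + b - a) with b by lia. exact Gb.
  - intros i Hi. destruct (Nat.leb_spec i a); destruct (Nat.leb_spec (S i) a).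
    + apply Fs; lia.
    + assert (i = a) by lia. subst i. replace (S a - a) with 1 by lia.
      rewrite Fa, <- G0. apply Gs. lia.
    + lia.
    + replace (S i - a) with (S (i - a)) by lia. apply Gs; lia.
Qed.

Lemma chain_sym {V : Type} (adj : V -> V -> Prop) u v L f :
  simple_graph adj -> chain adj u v L f -> chain adj v u L (fun t => f (L - t)).
Proof.
  intros [Hs _] [F0 [FL Fs]]. split; [|split].
  - rewrite Nat.sub_0_r. auto.
  - rewrite Nat.sub_diag. auto.
  - intros i Hi. apply Hs. replace (L - i) with (S (L - S i)) by lia. apply Fs. lia.
Qed.

Lemma chain_shift {V : Type} (adj : V -> V -> Prop) L f i j :
  (forall t, t < L -> adj (f t) (f (S t))) -> i <= j <= L ->
  chain adj (f i) (f j) (j - i) (fun t => f (i + t)).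
Proof.
  intros Hs Hij. split; [|split].
  - f_equal; lia.
  - f_equal; lia.
  - intros t Ht. replace (i + S t) with (S (i + t)) by lia. apply Hs. lia.
Qed.

Lemma dist_sym {V : Type} (adj : V -> V -> Prop) u v k :
  simple_graph adj -> dist adj u v k -> dist adj v u k.
Proof.
  intros Hsg Hd. destruct (dist_chain adj u v k Hd) as [f Hf].
  apply (dist_intro adj v u k _ (chain_sym adj u v k f Hsg Hf)).
  intros L g Hg. apply (dist_min adj u v k L _ Hd (chain_sym adj v u L g Hsg Hg)).
Qed.

Lemma dist_fun {V : Type} (adj : V -> V -> Prop) u v k k' :
  dist adj u v k -> dist adj u v k' -> k = k'.
Proof.
  intros H1 H2. destruct (dist_chain adj u v k H1) as [f Hf].
  destruct (dist_chain adj u v k' H2) as [g Hg].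
  pose proof (dist_min adj u v k k' g H1 Hg). pose proof (dist_min adj u v k' k f H2 Hf). lia.
Qed.

Lemma dist_refl {V : Type} (adj : V -> V -> Prop) u : dist adj u u 0.
Proof. apply (dist_intro adj u u 0 _ (chain_refl adj u)). intros; lia. Qed.

Lemma dist_adj {V : Type} (adj : V -> V -> Prop) u v :
  simple_graph adj -> adj u v -> dist adj u v 1.
Proof.
  intros [_ Hirr] H. apply (dist_intro adj u v 1 _ (chain_adj adj u v H)).
  intros L g [G0 [GL _]]. destruct L; [|lia]. exfalso. apply (Hirr u). congruence.
Qed.

Lemma dist_tri {V : Type} (adj : V -> V -> Prop) u m v a b c :
  dist adj u m a -> dist adj m v b -> dist adj u v c -> c <= a + b.
Proof.
  intros H1 H2 H3. destruct (dist_chain adj u m a H1) as [f Hf].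
  destruct (dist_chain adj m v b H2) as [g Hg].
  exact (dist_min adj u v c _ _ H3 (chain_trans adj u m v a b f g Hf Hg)).
Qed.

Lemma dist_path {V : Type} (adj : V -> V -> Prop) n f :
  dist adj (f 0) (f n) n -> (forall t, t < n -> adj (f t) (f (S t))) ->
  forall i j, i <= j <= n -> dist adj (f i) (f j) (j - i).
Proof.
  intros Hd Hs i j Hij. apply (dist_intro adj _ _ _ _ (chain_shift adj n f i j Hs Hij)).
  intros L g Hg.
  pose proof (chain_trans adj _ _ _ _ _ _ _ (chain_shift adj n f 0 i Hs ltac:(lia)) Hg) as H1.
  pose proof (chain_trans adj _ _ _ _ _ _ _ H1 (chain_shift adj n f j n Hs ltac:(lia))) as H2.
  replace (f (0 + 0)) with (f 0) in H2 by (f_equal; lia).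
  pose proof (dist_min adj _ _ _ _ _ Hd H2). lia.
Qed.

Lemma geo_unique {V : Type} (adj : V -> V -> Prop) u v k f g :
  geodetic adj -> dist adj u v k -> chain adj u v k f -> chain adj u v k g ->
  forall i, i <= k -> f i = g i.
Proof.
  intros Hgeo Hd Hf Hg i Hi.
  assert (Gf : geodesic_ft adj u v (map f (seq 0 (S k)))).
  { split. apply chain_walk_ft; auto. intros q Hq. destruct Hd as [_ Hm].
    rewrite length_map, length_seq. auto. }
  assert (Gg : geodesic_ft adj u v (map g (seq 0 (S k)))).
  { split. apply chain_walk_ft; auto. intros q Hq. destruct Hd as [_ Hm].
    rewrite length_map, length_seq. auto. }
  destruct (Hgeo u v) as [p [_ Hu]].
  pose proof (Hu _ Gf) as E1. pose proof (Hu _ Gg) as E2.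
  assert (E : map f (seq 0 (S k)) = map g (seq 0 (S k))) by congruence.
  assert (E3 := f_equal (fun l => nth_error l i) E). cbv beta in E3.
  rewrite !nth_error_map_seq in E3 by lia. congruence.
Qed.

Lemma mid_unique {V : Type} (adj : V -> V -> Prop) u v m m' k i :
  geodetic adj -> i <= k -> dist adj u v k ->
  dist adj u m i -> dist adj m v (k - i) ->
  dist adj u m' i -> dist adj m' v (k - i) -> m = m'.
Proof.
  intros Hgeo Hik Hd H1 H2 H3 H4.
  destruct (dist_chain adj _ _ _ H1) as [f1 C1].
  destruct (dist_chain adj _ _ _ H2) as [f2 C2].
  destruct (dist_chain adj _ _ _ H3) as [g1 D1].
  destruct (dist_chain adj _ _ _ H4) as [g2 D2].
  pose proof (chain_trans adj _ _ _ _ _ _ _ C1 C2) as CC.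
  pose proof (chain_trans adj _ _ _ _ _ _ _ D1 D2) as DD.
  replace (i + (k - i)) with k in CC, DD by lia.
  pose proof (geo_unique adj u v k _ _ Hgeo Hd CC DD i Hik) as E.
  simpl in E. rewrite Nat.leb_refl in E. destruct C1 as [_ [C1 _]]. destruct D1 as [_ [D1 _]].
  congruence.
Qed.

Definition Conf {V : Type} (adj : V -> V -> Prop) (c : nat -> V) (p r : nat) :=
  forall i j, i <= j -> j <= p ->
    dist adj (c (r + i)) (c (r + j)) (j - i) /\
    dist adj (c (r + (2*p+1) - i)) (c (r + (2*p+1) - j)) (j - i).

Lemma conf_rot {V : Type} (adj : V -> V -> Prop) (c : nat -> V) p r :
  simple_graph adj -> geodetic adj -> 1 <= p ->
  (forall t, adj (c t) (c (S t))) ->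
  (forall t, c (t + (2*p+1)) = c t) ->
  (forall a b, a < b -> b < a + (2*p+1) -> c a <> c b) ->
  Conf adj c p r -> Conf adj c p (r + p).
Proof.
  intros Hsg Hgeo Hp P1 P2 P3 HC i j Hij Hjp. split.
  -
    destruct (Nat.eq_dec i 0) as [Hi0|Hi0].
    + subst i. destruct (Nat.eq_dec j 0) as [Hj0|Hj0].
      * subst j. simpl. apply dist_refl.
      * set (q := p + 1 - j).
        assert (EY : c (r + p + j) = c (r + (2*p+1) - q)) by (f_equal; unfold q; lia).
        rewrite Nat.add_0_r, EY, Nat.sub_0_r.
        destruct (HC 0 p ltac:(lia) ltac:(lia)) as [HZX _].
        destruct (HC 0 q ltac:(lia) ltac:(lia)) as [_ HZY].
        destruct (HC q p ltac:(lia) ltac:(lia)) as [HqX HYp].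
        destruct (HC 0 q ltac:(lia) ltac:(lia)) as [HZq _].
        rewrite Nat.add_0_r in HZX, HZq. rewrite Nat.sub_0_r in HZY, HZX, HZq. replace (q - 0) with q in HZY by lia.
        rewrite P2 in HZY.
        assert (Eadj : c (r + (2*p+1) - p) = c (S (r + p))) by (f_equal; lia).
        rewrite Eadj in HYp.
        destruct (dist_chain adj _ _ _ (dist_sym adj _ _ _ Hsg HYp)) as [f Hf].
        pose proof (chain_trans adj _ _ _ _ _ _ _ (chain_adj adj _ _ (P1 (r + p))) Hf) as Ch.
        destruct (chain_dist adj _ _ _ _ Ch) as [e [He Hle]].
        pose proof (dist_tri adj _ _ _ _ _ _ He (dist_sym adj _ _ _ Hsg HZY)
                      (dist_sym adj _ _ _ Hsg HZX)) as Ht.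
        assert (e = j \/ e = p - q) as [E|E] by (unfold q in *; lia).
        { subst e. exact He. }
        exfalso. subst e.
        assert (Em : c (r + q) = c (r + (2*p+1) - q)).
        { apply (mid_unique adj (c (r + p)) (c r) _ _ p (p - q) Hgeo ltac:(lia)
                 (dist_sym adj _ _ _ Hsg HZX)).
          - apply dist_sym; auto.
          - replace (p - (p - q)) with q by lia. apply dist_sym; auto.
          - exact He.
          - replace (p - (p - q)) with q by lia. apply dist_sym; auto.
 }
        apply (P3 (r + q) (r + (2*p+1) - q)); auto; unfold q in *; lia.
    + assert (E1 : c (r + p + i) = c (r + (2*p+1) - (p + 1 - i))) by (f_equal; lia).
      assert (E2 : c (r + p + j) = c (r + (2*p+1) - (p + 1 - j))) by (f_equal; lia).
      rewrite E1, E2.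
      destruct (HC (p + 1 - j) (p + 1 - i) ltac:(lia) ltac:(lia)) as [_ H].
      apply dist_sym; auto. replace (j - i) with (p + 1 - i - (p + 1 - j)) by lia. exact H.
  - assert (E1 : c (r + p + (2*p+1) - i) = c (r + (p - i))).
    { rewrite <- (P2 (r + (p - i))). f_equal. lia. }
    assert (E2 : c (r + p + (2*p+1) - j) = c (r + (p - j))).
    { rewrite <- (P2 (r + (p - j))). f_equal. lia. }
    rewrite E1, E2.
    destruct (HC (p - j) (p - i) ltac:(lia) ltac:(lia)) as [H _].
    apply dist_sym; auto. replace (j - i) with (p - i - (p - j)) by lia. exact H.
Qed.

Lemma conf_shiftN {V : Type} (adj : V -> V -> Prop) (c : nat -> V) p r :
  (forall t, c (t + (2*p+1)) = c t) ->
  forall q, Conf adj c p (r + q * (2*p+1)) -> Conf adj c p r.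
Proof.
  intros P2 q. induction q as [|q IH]; intro H.
  - rewrite Nat.add_0_r in H. exact H.
  - apply IH. intros i j Hij Hjp. destruct (H i j Hij Hjp) as [A B].
    assert (forall t, c (r + S q * (2*p+1) + t) = c (r + q * (2*p+1) + t)) as E.
    { intro t. rewrite <- (P2 (r + q * (2*p+1) + t)). f_equal. simpl. nia. }
    assert (forall t, t <= p -> c (r + S q * (2*p+1) + (2*p+1) - t) = c (r + q * (2*p+1) + (2*p+1) - t)) as E'.
    { intros t Ht. rewrite <- (P2 (r + q * (2*p+1) + (2*p+1) - t)). f_equal. simpl. nia. }
    rewrite !E in A. rewrite !E' in B by lia. auto.
Qed.

Lemma conf_all {V : Type} (adj : V -> V -> Prop) (c : nat -> V) p :
  simple_graph adj -> geodetic adj -> 1 <= p ->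
  (forall t, adj (c t) (c (S t))) ->
  (forall t, c (t + (2*p+1)) = c t) ->
  (forall a b, a < b -> b < a + (2*p+1) -> c a <> c b) ->
  Conf adj c p 0 -> forall r, r < 2*p+1 -> Conf adj c p r.
Proof.
  intros Hsg Hgeo Hp P1 P2 P3 H0.
  assert (Hm : forall m, Conf adj c p (m * (2*p))).
  { induction m as [|m IH]. exact H0.
    pose proof (conf_rot adj c p _ Hsg Hgeo Hp P1 P2 P3 IH) as H1.
    pose proof (conf_rot adj c p _ Hsg Hgeo Hp P1 P2 P3 H1) as H2.
    replace (S m * (2*p)) with (m * (2*p) + p + p) by lia. exact H2. }
  intros r Hr. apply (conf_shiftN adj c p r P2 (2*p - r)).
  replace (r + (2*p - r) * (2*p+1)) with ((2*p+1 - r) * (2*p)) by nia. apply Hm.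
Qed.

Lemma conf_iso {V : Type} (adj : V -> V -> Prop) (c : nat -> V) p :
  simple_graph adj -> geodetic adj -> 1 <= p ->
  (forall t, adj (c t) (c (S t))) ->
  (forall t, c (t + (2*p+1)) = c t) ->
  (forall a b, a < b -> b < a + (2*p+1) -> c a <> c b) ->
  Conf adj c p 0 -> iso_circuit adj (map c (seq 0 (S (2*p+1)))) (2*p+1).
Proof.
  intros Hsg Hgeo Hp P1 P2 P3 H0.
  pose proof (conf_all adj c p Hsg Hgeo Hp P1 P2 P3 H0) as CA.
  set (N := 2*p+1) in *.
  split; [|split; [|split; [|split]]].
  - rewrite length_map, length_seq. reflexivity.
  - apply (walk_nth adj (c 0)). rewrite length_map, length_seq. intros i Hi.
    rewrite !nth_map_seq by lia. apply P1.
  - rewrite !nth_error_map_seq by lia. f_equal. rewrite <- (P2 0). reflexivity.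
  - apply NoDup_nth_error. intros i j Hi Hij.
    rewrite length_firstn, length_map, length_seq in Hi.
    rewrite !nth_error_firstn in Hij.
    destruct (Nat.ltb_spec i N); [|lia].
    destruct (Nat.ltb_spec j N).
    + rewrite !nth_error_map_seq in Hij by lia. injection Hij as Hij.
      destruct (Nat.lt_trichotomy i j) as [Hl|[Hl|Hl]]; auto.
      * exfalso. apply (P3 i j); auto; lia.
      * exfalso. apply (P3 j i); auto; lia.
    + rewrite nth_error_map_seq in Hij by lia. discriminate.
  - intros i j x y Hij HjN Hx Hy.
    rewrite nth_error_map_seq in Hx, Hy by lia. injection Hx as <-. injection Hy as <-.
    destruct (Nat.le_gt_cases (j - i) p) as [Hc|Hc].
    + destruct (CA i ltac:(lia) 0 (j - i) ltac:(lia) ltac:(lia)) as [A _].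
      rewrite Nat.add_0_r in A. replace (i + (j - i)) with j in A by lia.
      replace (Nat.min (j - i) (N + i - j)) with (j - i) by lia. rewrite Nat.sub_0_r in A. exact A.
    + destruct (CA i ltac:(lia) 0 (N + i - j) ltac:(lia) ltac:(lia)) as [_ B].
      rewrite Nat.sub_0_r in B. fold N in B. rewrite P2 in B.
      replace (i + N - (N + i - j)) with j in B by lia.
      replace (Nat.min (j - i) (N + i - j)) with (N + i - j) by lia. rewrite Nat.sub_0_r in B. exact B.
Qed.

Lemma walk_ft_chain' {V : Type} (adj : V -> V -> Prop) u v l :
  walk_ft adj u v l -> 1 <= length l /\ chain adj u v (length l - 1) (fun i => nth i l u).
Proof.
  intros [Hw [H0 HL]]. destruct l as [|x l']; [discriminate|]. split; [simpl; lia|].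
  split; [|split].
  - simpl in H0. injection H0. auto.
  - rewrite nth_error_nth' with (d := u) in HL by (simpl; lia). injection HL; auto.
  - intros i Hi. apply (walk_nth adj u (x :: l')); [exact Hw | simpl in *; lia].
Qed.

Lemma first_diff (P : nat -> Prop) n : P 0 -> ~ P n ->
  exists k, k < n /\ (forall i, i <= k -> P i) /\ ~ P (S k).
Proof.
  intros H0 Hn.
  destruct (nat_min_ex (fun m => ~ P m) n Hn) as [m [Hm Hmin]].
  destruct m as [|k]; [contradiction|].
  exists k. split; [|split; auto].
  - pose proof (Hmin n Hn). lia.
  - intros i Hi. apply NNPP. intro Hc. pose proof (Hmin i Hc). lia.
Qed.

Lemma mod_neq a b N : 0 < N -> a < b -> b < a + N -> a mod N <> b mod N.
Proof.
  intros HN H1 H2 E.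
  pose proof (Nat.div_mod_eq a N). pose proof (Nat.div_mod_eq b N).
  set (qa := a / N) in *. set (qb := b / N) in *. set (r := a mod N) in *.
  rewrite <- E in *. clearbody qa qb r.
  assert (qa < qb) by nia. nia.
Qed.

Lemma mod_succ t N : 0 < N ->
  (S (t mod N) < N -> S t mod N = S (t mod N)) /\
  (S (t mod N) = N -> S t mod N = 0).
Proof.
  intros HN. pose proof (Nat.div_mod_eq t N). split; intro H1.
  - symmetry. apply (Nat.mod_unique _ _ (t / N)); lia.
  - symmetry. apply (Nat.mod_unique _ _ (S (t / N))); lia.
Qed.

Theorem lemma5 (V : Type) (adj : V -> V -> Prop) (s : nat) :
  simple_graph adj -> geodetic adj -> 1 <= s ->
  (forall (c : list V) (n : nat), iso_circuit adj c n -> n <= 2 * s + 1) ->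
  broomlike adj s.
Proof.
  intros Hsg Hgeo Hs Hcirc a b a0 n Hlen Ha0 Hnd Hwab Hgeoa Hngeo g Hg.
  set (A := fun i => nth i a a0). set (G := fun i => nth i g a0).
  destruct Hgeoa as [u [v [Hwfa Hmina]]].
  destruct (walk_ft_chain' adj u v a Hwfa) as [_ ChA].
  assert (Hu : u = a0).
  { destruct Hwfa as [_ [Hu _]]. congruence. }
  subst u. rewrite Hlen in ChA. replace (S n - 1) with n in ChA by lia.
  assert (DAn : dist adj a0 v n).
  { apply (dist_intro adj _ _ _ _ ChA). intros L f Hf.
    pose proof (Hmina _ (chain_walk_ft adj _ _ _ _ Hf)) as H.
    rewrite length_map, length_seq in H. lia. }
  destruct ChA as [A0 [An AS]].
  assert (A0' : A 0 = a0) by exact A0. assert (An' : A n = v) by exact An.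
  assert (AS' : forall i, i < n -> adj (A i) (A (S i))) by exact AS.
  clear A0 An AS. rename A0' into A0. rename An' into An. rename AS' into AS.
  assert (DA : forall i j, i <= j <= n -> dist adj (A i) (A j) (j - i)).
  { apply (dist_path adj n A); auto. rewrite A0, An. exact DAn. }
  assert (Hab : adj (A n) b).
  { apply (walk_nth adj a0 (a ++ [b])) with (i := n) in Hwab;
      [|rewrite length_app; simpl; lia].
    unfold A. rewrite app_nth1 in Hwab by lia. rewrite app_nth2 in Hwab by lia.
    rewrite Hlen, Nat.sub_diag in Hwab. exact Hwab. }
  assert (Hbn : forall i, i <= n -> A i <> b).
  { intros i Hi E. apply NoDup_remove_2 with (l' := []) in Hnd. apply Hnd.
    rewrite app_nil_r. rewrite <- E. apply nth_In. lia. }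
  destruct Hg as [Hwfg Hming].
  destruct (walk_ft_chain' adj a0 b g Hwfg) as [Hg1 ChG].
  set (m := length g - 1) in ChG.
  assert (DGm : dist adj a0 b m).
  { apply (dist_intro adj _ _ _ _ ChG). intros L f Hf.
    pose proof (Hming _ (chain_walk_ft adj _ _ _ _ Hf)) as H.
    rewrite length_map, length_seq in H. unfold m. lia. }
  assert (Hwfab : walk_ft adj a0 b (a ++ [b])).
  { split; [exact Hwab|split].
    - rewrite nth_error_app1 by lia. exact Ha0.
    - replace (length (a ++ [b]) - 1) with (length a) by (rewrite length_app; simpl; lia).
      rewrite nth_error_app2 by lia. rewrite Nat.sub_diag. reflexivity. }
  assert (Hm1 : m <= S n).
  { pose proof (Hming _ Hwfab) as H. rewrite length_app, Hlen in H. simpl in H. unfold m. lia. }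
  assert (Hm2 : m <> S n).
  { intro E. apply Hngeo. exists a0, b. split; [exact Hwfab|].
    intros q Hq. pose proof (Hming _ Hq). rewrite length_app, Hlen. simpl. unfold m in E. lia. }
  assert (Hm3 : n <= m + 1).
  { assert (D1 : dist adj b (A n) 1).
    { apply dist_adj; auto. destruct Hsg as [Hsym _]. auto. }
    pose proof (dist_tri adj _ _ _ _ _ n DGm D1) as H. rewrite An in H. exact (H DAn). }
  assert (Hmn : m = n).
  { destruct (Nat.eq_dec m n) as [E|E]; auto. exfalso.
    assert (m = n - 1 /\ 1 <= n) as [E1 E2] by lia.
    apply (Hbn (n - 1) ltac:(lia)).
    apply (mid_unique adj a0 (A n) _ _ n (n - 1) Hgeo ltac:(lia)).
    - rewrite An. exact DAn.
    - rewrite <- A0. replace (n - 1) with (n - 1 - 0) at 2 by lia. apply DA; lia.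
    - replace (n - (n - 1)) with (n - (n - 1)) by lia. apply DA; lia.
    - rewrite <- E1. exact DGm.
    - replace (n - (n - 1)) with 1 by lia. apply dist_adj; auto. destruct Hsg as [Hsym _]. auto. }
  assert (Hlg : length g = S n) by (unfold m in Hmn; lia).
  rewrite Hmn in ChG. destruct ChG as [G0 [Gn GS]]. 
  assert (G0' : G 0 = a0) by exact G0. assert (Gn' : G n = b) by exact Gn.
  assert (GS' : forall i, i < n -> adj (G i) (G (S i))) by exact GS.
  clear G0 Gn GS. rename G0' into G0. rename Gn' into Gn. rename GS' into GS.
  assert (DG : forall i j, i <= j <= n -> dist adj (G i) (G j) (j - i)).
  { apply (dist_path adj n G); auto. rewrite G0, Gn. rewrite <- Hmn. exact DGm. }
  destruct (first_diff (fun i => G i = A i) n ltac:(congruence)) as [k [Hkn [Heq Hneq]]].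
  { intro E. apply (Hbn n ltac:(lia)). congruence. }
  set (p := n - k).
  assert (Hp1 : 1 <= p) by (unfold p; lia).
  assert (Hkp : k + p = n) by (unfold p; lia).
  set (N := 2 * p + 1).
  set (cyc := fun t => if t <=? p then A (k + t) else G (k + (N - t))).
  set (c := fun t => cyc (t mod N)).
  assert (HN : 0 < N) by (unfold N; lia).
  assert (P2 : forall t, c (t + (2*p+1)) = c t).
  { intro t. unfold c. fold N. f_equal. replace (t + N) with (t + 1 * N) by lia.
    apply Nat.Div0.mod_add. }
  assert (adjA : forall i, i < n -> adj (A i) (A (S i))) by auto.
  assert (adjG : forall i, i < n -> adj (G i) (G (S i))) by auto.
  destruct Hsg as [Hsym Hirr].
  assert (Pcyc : forall r, r < N -> adj (cyc r) (cyc (if S r =? N then 0 else S r))).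
  { intros r Hr. unfold cyc.
    destruct (Nat.eqb_spec (S r) N) as [E|E].
    - replace r with (2 * p) by (unfold N in E; lia).
      destruct (Nat.leb_spec (2*p) p); [lia|].
      destruct (Nat.leb_spec 0 p); [|lia].
      replace (k + (N - 2 * p)) with (S k) by (unfold N; lia).
      rewrite Nat.add_0_r, <- (Heq k ltac:(lia)). apply Hsym, adjG. lia.
    - destruct (Nat.leb_spec r p); destruct (Nat.leb_spec (S r) p).
      + replace (k + S r) with (S (k + r)) by lia. apply adjA. lia.
      + assert (r = p) by lia. subst r.
        replace (k + (N - S p)) with n by (unfold N; lia).
        replace (k + p) with n by lia. rewrite Gn. exact Hab.
      + lia.
      + replace (k + (N - r)) with (S (k + (N - S r))) by (unfold N in *; lia).
        apply Hsym, adjG. unfold N in *; lia. }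
  assert (P1 : forall t, adj (c t) (c (S t))).
  { intro t. unfold c. pose proof (Nat.mod_upper_bound t N ltac:(lia)) as Hb.
    destruct (mod_succ t N HN) as [M1 M2].
    pose proof (Pcyc (t mod N) Hb) as H.
    destruct (Nat.eqb_spec (S (t mod N)) N) as [E|E].
    - rewrite (M2 E). exact H.
    - rewrite M1 by lia. exact H. }
  assert (Lev : forall r, r < N -> dist adj a0 (cyc r) (if r <=? p then k + r else k + (N - r))).
  { intros r Hr. unfold cyc. destruct (Nat.leb_spec r p).
    - rewrite <- A0. replace (k + r) with (k + r - 0) at 2 by lia. apply DA. lia.
    - rewrite <- G0. replace (k + (N - r)) with (k + (N - r) - 0) at 2 by lia. apply DG.
      unfold N in *; lia. }
  assert (Hk1 : G (S k) <> A (S k)) by exact Hneq.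
  assert (P3 : forall x y, x < y -> y < x + (2*p+1) -> c x <> c y).
  { intros x y Hxy Hyx E. unfold c in E.
    pose proof (mod_neq x y N HN Hxy Hyx) as Hne.
    pose proof (Nat.mod_upper_bound x N ltac:(lia)) as Bx.
    pose proof (Nat.mod_upper_bound y N ltac:(lia)) as By.
    set (rx := x mod N) in *. set (ry := y mod N) in *. clearbody rx ry.
    assert (Inj : forall r1 r2, r1 < N -> r2 < N -> r1 <= p -> p < r2 -> cyc r1 <> cyc r2).
    { intros r1 r2 H1 H2 H3 H4 E'.
      pose proof (Lev r1 H1) as L1. pose proof (Lev r2 H2) as L2.
      destruct (Nat.leb_spec r1 p); [|lia]. destruct (Nat.leb_spec r2 p); [lia|].
      rewrite E' in L1. pose proof (dist_fun adj _ _ _ _ L1 L2) as EL.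
      assert (r1 = N - r2) by lia.
      unfold cyc in E'. destruct (Nat.leb_spec r1 p); [|lia]. destruct (Nat.leb_spec r2 p); [lia|].
      set (w := r1) in *. replace (N - r2) with w in E' by lia.
      assert (1 <= w) by (unfold N in *; lia).
      apply Hk1. symmetry.
      apply (mid_unique adj a0 (A (k + w)) _ _ (k + w) (S k) Hgeo ltac:(lia)).
      - rewrite <- A0. replace (k + w) with (k + w - 0) at 2 by lia. apply DA; lia.
      - rewrite <- A0. replace (S k) with (S k - 0) at 2 by lia. apply DA; lia.
      - replace (k + w - S k) with (k + w - S k) by lia. apply DA; lia.
      - rewrite <- G0. replace (S k) with (S k - 0) at 2 by lia. apply DG; lia.
      - rewrite E'. apply DG; lia. }
    destruct (Nat.leb_spec rx p); destruct (Nat.leb_spec ry p).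
    - pose proof (Lev rx Bx) as L1. pose proof (Lev ry By) as L2.
      rewrite E in L1. pose proof (dist_fun adj _ _ _ _ L1 L2) as EL.
      destruct (Nat.leb_spec rx p); destruct (Nat.leb_spec ry p); lia.
    - exact (Inj rx ry Bx By ltac:(lia) ltac:(lia) E).
    - exact (Inj ry rx By Bx ltac:(lia) ltac:(lia) (eq_sym E)).
    - pose proof (Lev rx Bx) as L1. pose proof (Lev ry By) as L2.
      rewrite E in L1. pose proof (dist_fun adj _ _ _ _ L1 L2) as EL.
      destruct (Nat.leb_spec rx p); destruct (Nat.leb_spec ry p); lia. }
  assert (C0 : Conf adj c p 0).
  { assert (Fw : forall i, i <= p -> c (0 + i) = A (k + i)).
    { intros i Hi. unfold c. rewrite Nat.add_0_l. rewrite Nat.mod_small by (unfold N; lia). unfold cyc.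
      destruct (Nat.leb_spec i p); [reflexivity|lia]. }
    assert (Bw : forall i, i <= p -> c (0 + (2*p+1) - i) = G (k + i)).
    { intros i Hi. unfold c. fold N. destruct (Nat.eq_dec i 0) as [E|E].
      - subst i. rewrite Nat.sub_0_r, Nat.add_0_l, Nat.Div0.mod_same. unfold cyc. simpl.
        rewrite !Nat.add_0_r. symmetry. apply Heq. lia.
      - rewrite Nat.mod_small by (unfold N; lia). unfold cyc.
        destruct (Nat.leb_spec (0 + N - i) p); [unfold N in *; lia|]. f_equal. unfold N. lia. }
    intros i j Hij Hjp. rewrite !Fw, !Bw by lia. split.
    - replace (j - i) with (k + j - (k + i)) by lia. apply DA; lia.
    - replace (j - i) with (k + j - (k + i)) by lia. apply DG; lia. }
  pose proof (conf_iso adj c p (conj Hsym Hirr) Hgeo Hp1 P1 P2 P3 C0) as Hiso.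
  pose proof (Hcirc _ _ Hiso) as Hle.
  exists p. split; [lia|]. split; [lia|]. split; [unfold p; lia|]. split; [exact Hlg|]. split.
  - intros i Hi. rewrite !nth_error_nth' with (d := a0) by lia.
    f_equal. apply Heq. unfold p in Hi. lia.
  - replace (n - p + 1) with (S k) by (unfold p; lia).
    rewrite !nth_error_nth' with (d := a0) by lia. intro E. injection E. exact Hneq.
Qed.
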